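(* Let $A=(i_1,\dots,i_a)$ be an ordered tuple of distinct elements of $I_d$, $\alpha\in\mathbb{Z}_2^{a,\mathrm{ev}}$, $r\ge0$, and put $\overrightarrow{A}=(i_a,i_1,\dots,i_{a-1})$, $\overrightarrow{\alpha}=(\alpha_a,\alpha_1,\dots,\alpha_{a-1})$. Then in $\mathcal{G}$, $$\overrightarrow{A}^{(r,\overrightarrow{\alpha})}=(-1)^{\alpha_a((a-1)(l-1)+r+1)}A^{(r,\alpha)}.$$
   Context: Fix a commutative ring $R$ and integers $l,d\ge1$; $I_a=\{1,\dots,a\}$. Let $\mathcal{G}$ be the $R$-superalgebra that is free as an $R$-module with basis $\{x_1^{m_1}\cdots x_d^{m_d}\,w\,c_1^{e_1}\cdots c_d^{e_d}: 0\le m_i\le l-1,\ w\in\Sigma_d,\ e_i\in\{0,1\}\}$, with multiplication determined by: the $x_i$ commute and $x_i^l=0$; $w\in\Sigma_d$ multiply as in the symmetric group (composition right to left); $c_i^2=1$, $c_ic_j=-c_jc_i$ for $i\ne j$; $wx_i=x_{w(i)}w$, $wc_i=c_{w(i)}w$; $x_ic_i=-c_ix_i$, $x_ic_j=c_jx_i$ for $i\ne j$. For an ordered tuple $A=(i_1,\dots,i_a)$ of distinct elements of $I_d$, $\sigma_A$ is the cycle $i_1\mapsto i_2\mapsto\dots\mapsto i_a\mapsto i_1$. For $\alpha\in\mathbb{Z}_2^a$: $|\alpha|=\sum_j\alpha_j$; $\mathbb{Z}_2^{a,\mathrm{ev}}$ is the set of $\alpha$ with $|\alpha|$ even; $c_\alpha(A)=c_{i_1}^{\alpha_1}\cdots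 c_{i_a}^{\alpha_a}$; $\epsilon^\alpha_j=\prod_{k<j}(-1)^{\alpha_k}$. For $r\ge0$, $\alpha\in\mathbb{Z}_2^{a,\mathrm{ev}}$: $h^\alpha_r(A)=\sum_{r_1+\dots+r_a=(a-1)(l-1)+r,\ r_j\ge0}\prod_j(\epsilon^\alpha_jx_{i_j})^{r_j}$ and $A^{(r,\alpha)}=h^\alpha_r(A)\sigma_Ac_\alpha(A)$. *)

(* Defs.v *)
From HB Require Import structures.
From mathcomp Require Import all_boot all_order all_algebra fingroup perm.
From mathcomp Require Import zify.
Set Implicit Arguments. Unset Strict Implicit. Unset Printing Implicit Defensive.
Import GRing.Theory.
Local Open Scope ring_scope.

(* Indices: I_d is represented by 'I_d (0-based); an ordered tuple
   A = (i_1,...,i_a) of distinct elements is an injective map 'I_a -> 'I_d. *)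

Section Cycle.
Variables (d a : nat) (A : 'I_a -> 'I_d).

Definition cycle_fun (i : 'I_d) : 'I_d :=
  if [pick j | A j == i] is Some j then A (ordS j) else i.

Lemma cycle_fun_inj : injective A -> injective cycle_fun.
Proof.
move=> Ainj i1 i2; rewrite /cycle_fun.
case: pickP => [j1 /eqP Hj1|H1]; case: pickP => [j2 /eqP Hj2|H2].
- move/Ainj/ordS_inj => E'.
  by rewrite -Hj1 -Hj2 E'.
- move=> E; have := H2 (ordS j1); by rewrite -E eqxx.
- move=> E; have := H1 (ordS j2); by rewrite E eqxx.
- by [].
Qed.

End Cycle.

Section Algebra.
Variables (R : comPzRingType) (G : algType R) (d l : nat)
  (x : 'I_d -> G) (c : 'I_d -> G) (sg : {perm 'I_d} -> G).

(* The defining relations of the superalgebra G.  The symmetric group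
   multiplies with composition right to left: (w w')(i) = w (w' i); in
   mathcomp, (w' * w)%g i = w (w' i). *)
Definition G_relations : Prop :=
  (forall i j, x i * x j = x j * x i) /\
      (forall i, x i ^+ l = 0) /\
      sg 1%g = 1 /\ (forall w w', sg w * sg w' = sg (w' * w)%g) /\
      (forall i, c i * c i = 1) /\
      (forall i j, i != j -> c i * c j = - (c j * c i)) /\
      (forall w i, sg w * x i = x (w i) * sg w) /\
      (forall w i, sg w * c i = c (w i) * sg w) /\
      (forall i j, x i * c j = if i == j then - (c j * x i) else c j * x i).

Definition basis_index := ({ffun 'I_d -> 'I_l} * {perm 'I_d} * {ffun 'I_d -> bool})%type.

Definition monomial (b : basis_index) : G :=
  let: (m, w, e) := b in
  (\prod_(i < d) x i ^+ m i) * sg w * (\prod_(i < d) c i ^+ e i).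

Definition monomial_basis : Prop :=
  forall g : G, exists! coef : {ffun basis_index -> R},
    g = \sum_(b : basis_index) coef b *: monomial b.

Definition sigmaA a (A : 'I_a -> 'I_d) (HA : injective A) : {perm 'I_d} :=
  perm (cycle_fun_inj HA).

Definition c_alpha a (A : 'I_a -> 'I_d) (alpha : 'I_a -> bool) : G :=
  \prod_(j < a) c (A j) ^+ alpha j.

Definition eps_alpha a (alpha : 'I_a -> bool) (j : 'I_a) : G :=
  \prod_(k < a | (k < j)%N) (-1) ^+ alpha k.

Definition h_alpha a (A : 'I_a -> 'I_d) (alpha : 'I_a -> bool) (r : nat) : G :=
  let N := ((a.-1) * (l.-1) + r)%N in
  \sum_(rr : {ffun 'I_a -> 'I_N.+1} | (\sum_(j < a) rr j)%N == N)
     \prod_(j < a) (eps_alpha alpha j * x (A j)) ^+ rr j.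

Definition A_r_alpha a (A : 'I_a -> 'I_d) (HA : injective A)
  (alpha : 'I_a -> bool) (r : nat) : G :=
  h_alpha A alpha r * sg (sigmaA HA) * c_alpha A alpha.

End Algebra.

Definition rot_right T a (f : 'I_a -> T) : 'I_a -> T := fun j => f (ord_pred j).

Lemma rot_right_inj T a (f : 'I_a -> T) : injective f -> injective (rot_right f).
Proof.
by move=> finj j1 j2 /finj/ord_pred_inj.
Qed.

(* Main.v *)
Require Import Defs.
From HB Require Import structures.
From mathcomp Require Import all_boot all_order all_algebra fingroup perm.
Import GRing.Theory.
Local Open Scope ring_scope.

Lemma ordS_max a : ordS (ord_max : 'I_a.+1) = ord0.
Proof. by apply: val_inj; rewrite /= modnn. Qed.

Lemma ordS_widen a (i : 'I_a) : ordS (widen_ord (leqnSn a) i) = lift ord0 i.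
Proof. by apply: val_inj; rewrite /= modn_small // ltnS. Qed.

Lemma ord_pred0 a : ord_pred (ord0 : 'I_a.+1) = ord_max.
Proof. by rewrite -(ordS_max a) ordSK. Qed.

Lemma ord_pred_lift a (i : 'I_a) : ord_pred (lift ord0 i) = widen_ord (leqnSn a) i.
Proof. by rewrite -ordS_widen ordSK. Qed.

Section Alg.
Variables (R : comPzRingType) (G : algType R).

Lemma sign_factor (I : Type) (s : seq I) (E n : I -> nat) (z : I -> G) :
  \prod_(i <- s) ((-1) ^+ E i * z i) ^+ n i
  = (-1) ^+ (\sum_(i <- s) E i * n i) * \prod_(i <- s) z i ^+ n i.
Proof.
elim: s => [|i s IH]; first by rewrite !big_nil mulr1.
rewrite !big_cons IH exprMn_comm; last exact: esym (commr_sign _ _).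
rewrite -exprM exprD -!mulrA; congr (_ * _).
by rewrite !mulrA (commr_sign (z i ^+ n i)).
Qed.

Lemma rot_prod a (F : 'I_a.+1 -> G) (HF : forall i j, GRing.comm (F i) (F j)) :
  \prod_(j < a.+1) F (ord_pred j) = \prod_(j < a.+1) F j.
Proof.
rewrite big_ord_recl big_ord_recr /= ord_pred0.
under eq_bigr do rewrite ord_pred_lift.
by apply: commr_prod => i _; apply: HF.
Qed.

Variables (d l : nat) (x : 'I_d -> G).
Hypothesis Hx : forall i j, x i * x j = x j * x i.

Lemma em_par a (alpha : 'I_a.+1 -> bool) (Hev : ~~ odd (\sum_(j < a.+1) alpha j))
  (k : 'I_a.+1) :
  ((\sum_(m < a.+1 | m < ordS k) rot_right alpha m) %% 2
  = (alpha ord_max + \sum_(m < a.+1 | m < k) alpha m) %% 2)%N.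
Proof.
have [->|Hk] := eqVneq k ord_max.
  rewrite ordS_max big_pred0 // big_mkcond big_ord_recr /= ltnn addn0.
  under eq_bigr => i _ do rewrite ltn_ord.
  move: Hev; rewrite big_ord_recr /= !modn2 !oddD oddb.
  by case: odd; case: (alpha ord_max).
have kl : (k < a)%N by move: (ltn_ord k) Hk; rewrite ltnS leq_eqVlt => /orP [/eqP E|] //; rewrite -(inj_eq val_inj) /= E eqxx.
have -> : k = widen_ord (leqnSn a) (Ordinal kl) by apply: val_inj.
rewrite ordS_widen big_mkcond big_ord_recl /= /rot_right ord_pred0.
rewrite [in RHS]big_mkcond big_ord_recr /= ltnNge (ltnW kl) addn0 /=.
idtac.
apply: (congr1 (modn^~ 2)); congr (_ + _)%N; apply: eq_bigr => i _.
by rewrite /bump /= !add1n ltnS ord_pred_lift.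
Qed.


Lemma h_rot a (A : 'I_a.+1 -> 'I_d) (alpha : 'I_a.+1 -> bool)
  (Hev : ~~ odd (\sum_(j < a.+1) alpha j)) (r : nat) :
  h_alpha l x (rot_right A) (rot_right alpha) r
  = (-1) ^+ (alpha ord_max * ((a.+1).-1 * l.-1 + r)) * h_alpha l x A alpha r.
Proof.
rewrite /h_alpha.
set N := ((a.+1).-1 * l.-1 + r)%N.
pose rotf := fun rr : {ffun 'I_a.+1 -> 'I_N.+1} => ([ffun j => rr (ord_pred j)] : {ffun 'I_a.+1 -> 'I_N.+1}).
have rotf_inj : injective rotf.
  move=> r1 r2 E; apply/ffunP => k.
  by have := congr1 (fun f : {ffun 'I_a.+1 -> 'I_N.+1} => f (ordS k)) E; rewrite /rotf !ffunE ordSK.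
have rsum rr : (\sum_(j < a.+1) rotf rr j = \sum_(j < a.+1) rr j)%N.
  rewrite [RHS](reindex_inj (@ord_pred_inj a.+1)) /=.
  by apply: eq_bigr => j _; rewrite /rotf ffunE.
rewrite (reindex_inj rotf_inj) /= mulr_sumr.
apply: eq_big => rr; first by rewrite rsum.
rewrite rsum => /eqP Hsum.
rewrite /eps_alpha.
under eq_bigr => j _ do rewrite prodrXr ffunE.
under [in RHS]eq_bigr => j _ do rewrite prodrXr.
rewrite !sign_factor.
rewrite /rot_right (@rot_prod a (fun j => x (A j) ^+ rr j)); last first.
  move=> i j; apply: commrX; apply/esym; apply: commrX; exact: Hx.
rewrite mulrA -exprD; congr (_ * _).
rewrite -signr_odd -[RHS]signr_odd; congr (_ ^+ _).
suff H : ((\sum_(j < a.+1) (\sum_(k < a.+1 | k < j) alpha (ord_pred k)) * rr (ord_pred j)) %% 2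
   = (alpha ord_max * N + \sum_(j < a.+1) (\sum_(k < a.+1 | k < j) alpha k) * rr j) %% 2)%N.
  by move: H; rewrite !modn2; do 2 case: odd.
rewrite (reindex_inj (@ordS_inj a.+1)) /=.
rewrite -modn_summ.
under eq_bigr => j _ do rewrite ordSK -modnMml (em_par _ _ Hev) modnMml.
rewrite modn_summ.
have -> : (alpha ord_max * N = \sum_(j < a.+1) alpha ord_max * rr j)%N by rewrite -big_distrr Hsum.
rewrite -big_split /=.
by apply: (congr1 (modn^~ 2)); apply: eq_bigr => j _; rewrite mulnDl.
Qed.
End Alg.

Section AlgC.
Variables (R : comPzRingType) (G : algType R) (d : nat) (c : 'I_d -> G).
Hypothesis Hanti : forall i j, i != j -> c i * c j = - (c j * c i).

Lemma c_anti (I : eqType) (s : seq I) (F : I -> 'I_d) (e : I -> bool) (k : 'I_d) :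
  (forall i, i \in s -> F i != k) ->
  c k * \prod_(i <- s) c (F i) ^+ e i
  = (-1) ^+ (\sum_(i <- s) e i) * (\prod_(i <- s) c (F i) ^+ e i) * c k.
Proof.
elim: s => [|i s IH] Hs; first by rewrite !big_nil expr0 mulr1 !mul1r.
have H1 : c k * c (F i) ^+ e i = (-1) ^+ e i * c (F i) ^+ e i * c k.
  case: (e i) => /=; last first. by rewrite !expr0 mulr1 !mul1r. 
  rewrite !expr1 mulN1r mulNr Hanti //; apply/negP => /eqP Ek.
  by move: (Hs i (mem_head _ _)); rewrite Ek eqxx.
rewrite !big_cons mulrA H1 -!mulrA IH; last first.
  by move=> j Hj; apply: Hs; rewrite in_cons Hj orbT.
rewrite exprD !mulrA; congr (_ * _ * _).
rewrite -!mulrA; congr (_ * _).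
by rewrite (commr_sign (c (F i) ^+ e i)).
Qed.
Lemma c_rot a (A : 'I_a.+1 -> 'I_d) (HA : injective A) (alpha : 'I_a.+1 -> bool)
  (Hev : ~~ odd (\sum_(j < a.+1) alpha j)) :
  c_alpha c (rot_right A) (rot_right alpha) = (-1) ^+ alpha ord_max * c_alpha c A alpha.
Proof.
rewrite /c_alpha /rot_right big_ord_recl [in RHS]big_ord_recr /= ord_pred0.
under eq_bigr do rewrite ord_pred_lift.
have Hpar : (-1) ^+ (\sum_(i < a) alpha (widen_ord (leqnSn a) i)) = (-1) ^+ alpha ord_max :> G.
  rewrite -signr_odd -[RHS]signr_odd; congr (_ ^+ _).
  move: Hev; rewrite big_ord_recr /= oddD oddb.
  by case: odd; case: (alpha ord_max).
case Ea: (alpha ord_max) => /=; last by rewrite expr0 mulr1 !mul1r.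
rewrite expr1 c_anti; last first.
  move=> i _; apply/negP => /eqP /HA /(congr1 val) /= E.
  by move: (ltn_ord i); rewrite E ltnn.
by rewrite Hpar Ea expr1 mulrA.
Qed.
End AlgC.

Lemma sigma_rot d a (A : 'I_a -> 'I_d) (HA : injective A) :
  sigmaA (rot_right_inj HA) = sigmaA HA.
Proof.
apply/permP => i; rewrite !permE /cycle_fun /rot_right.
case: pickP => [j /eqP Hj | H]; case: pickP => [k /eqP Hk | H'].
- have E : ord_pred j = k by apply: HA; rewrite Hj Hk.
  by rewrite ordSK -E ord_predK.
- by have := H' (ord_pred j); rewrite Hj eqxx.
- by have := H (ordS k); rewrite ordSK Hk eqxx.
- by [].
Qed.

(* The tuple A = (i_1, ..., i_{a'}) has length a' = a.+1 >= 1 and is encoded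
   as an injective map 'I_a.+1 -> 'I_d (0-based positions). *)
Theorem mainTheorem12 (R : comPzRingType) (G : algType R) (d l : nat)
    (x c : 'I_d -> G) (sg : {perm 'I_d} -> G)
    (Hd : (0 < d)%N) (Hl : (0 < l)%N)
    (Hrel : G_relations l x c sg) (Hbasis : monomial_basis l x c sg)
    (a : nat) (A : 'I_a.+1 -> 'I_d) (HA : injective A)
    (alpha : 'I_a.+1 -> bool) (Hev : ~~ odd (\sum_(j < a.+1) alpha j))
    (r : nat) :
  A_r_alpha l x c sg (rot_right_inj HA) (rot_right alpha) r
  = (-1) ^+ (alpha ord_max * ((a.+1).-1 * l.-1 + r + 1))
      * A_r_alpha l x c sg HA alpha r.
Proof.
move: Hrel => [Hx [_ [_ [_ [_ [Hanti _]]]]]].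
rewrite /A_r_alpha sigma_rot (@c_rot R G d c Hanti a A HA alpha Hev) (@h_rot R G d l x Hx a A alpha Hev r).
rewrite (mulnDr _ _ 1) muln1 exprD !mulrA; congr (_ * _).
rewrite -!mulrA; congr (_ * _).
by rewrite mulrA; apply: commr_sign.
Qed.
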